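(* Let $\Gamma$ be a numerical semigroup, $e'\in\Gamma$, and $\Gamma_{e'}=\{0\}\cup(e'+\Gamma)$. For all $m,m'\in\Gamma$, \[ D_{\Gamma_{e'}}(2e'+m,2e'+m')=\big(e'+D_\Gamma(m,m')\big)\cup\{0,2e'+m,2e'+m'\}. \] If in addition $|m-m'|<e'$, this union is disjoint; in particular \[ |D_\Gamma(m,m')|+2\le|D_{\Gamma_{e'}}(2e'+m,2e'+m')|\le|D_\Gamma(m,m')|+3. \]
   Context: A numerical semigroup is a subset of $\mathbb N$ containing $0$, closed under addition, with finite complement. For a numerical semigroup $S$ and $x\in\mathbb Z$, $D_S(x)=\{s\in S:x-s\in S\}$ and $D_S(x_1,x_2)=D_S(x_1)\cup D_S(x_2)$. *)

(* Defs.v *)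
From mathcomp Require Import all_boot.
From mathcomp Require Import finmap.
Set Implicit Arguments. Unset Strict Implicit. Unset Printing Implicit Defensive.

Local Open Scope nat_scope.
Definition numerical_semigroup (S : pred nat) : Prop :=
  [/\ S 0,
      (forall a b, S a -> S b -> S (a + b)%N) &
      exists N, forall n, N <= n -> S n ].

(* Since S is a
   subset of N, any such s satisfies 0 <= s <= x, so D_S(x) is a finite set;
   the subtraction below is never truncated on the elements we keep. *)
Definition Dset (S : pred nat) (x : nat) : {fset nat} :=
  [fset s in iota 0 x.+1 | S s && S (x - s)%N]%fset.

Definition Dset2 (S : pred nat) (x1 x2 : nat) : {fset nat} :=
  (Dset S x1 `|` Dset S x2)%fset.

Definition shift_sg (S : pred nat) (e : nat) : pred nat :=
  fun n => (n == 0) || ((e <= n) && S (n - e)%N).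

Definition fshift (e : nat) (A : {fset nat}) : {fset nat} :=
  [fset (e + s)%N | s in A]%fset.

(* Main.v *)
Require Import Defs.
From mathcomp Require Import all_boot.
From mathcomp Require Import finmap.
From mathcomp Require Import zify.
Local Open Scope nat_scope.
Lemma memD S x s : (s \in Dset S x) = [&& s <= x, S s & S (x - s)].
Proof. rewrite /Dset !inE mem_iota /=.
have -> : ((s == 0) || (0 < s < 1 + x)) = (s <= x) by case: s => //= s; rewrite add1n ltnS.
by []. Qed.
Lemma memsh e A y : (y \in fshift e A) = (e <= y) && (y - e \in A).
Proof.
apply/imfsetP/andP => [[s sA ->]|[ey yA]]. by rewrite leq_addr addKn.
by exists (y - e) => //; rewrite subnKC.
Qed.
Lemma memDsh (G : pred nat) (e m y : nat) : (forall a b, G a -> G b -> G (a + b)) -> G e -> G m ->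
  (y \in Dset (shift_sg G e) (2*e+m)) = [|| y==0, y==2*e+m | (e<=y) && (y - e \in Dset G m)].
Proof.
move=> hadd Ge Gm; rewrite !memD /shift_sg.
have Gx : G (2 * e + m - e).
  have -> : 2 * e + m - e = e + m by lia.
  exact: hadd.
apply/idP/idP.
- case/and3P => yx /orP[/eqP->|/andP[ey Gy]] /orP[/eqP h|/andP[ey2 Gy2]] //.
  + apply/orP; right; apply/orP; left; apply/eqP; lia.
  + apply/orP; right; apply/orP; right.
    rewrite ey Gy /=; apply/andP; split; first lia.
    by have <- : 2 * e + m - y - e = m - (y - e) by lia.
- case/or3P => [/eqP->|/eqP->|/andP[ey /and3P[a b c]]].
  + by rewrite subn0 leq0n eqxx /= (_ : e <= 2 * e + m) ?Gx ?orbT //; lia.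
  + by rewrite subnn leqnn eqxx /= (_ : e <= 2 * e + m) ?Gx ?orbT //; lia.
  + apply/and3P; split; first lia.
    * by rewrite ey b orbT.
    * have -> : 2 * e + m - y - e = m - (y - e) by lia.
      by rewrite c (_ : e <= 2 * e + m - y) ?orbT //; lia.
Qed.

Theorem lemma4p3 (G : pred nat) (e m m' : nat) :
  numerical_semigroup G -> G e -> G m -> G m' ->
  Dset2 (shift_sg G e) (2 * e + m) (2 * e + m') =
    (fshift e (Dset2 G m m') `|` [fset 0%N; (2 * e + m)%N; (2 * e + m')%N])%fset
  /\ (maxn m m' - minn m m' < e ->
      [disjoint fshift e (Dset2 G m m') & [fset 0%N; (2 * e + m)%N; (2 * e + m')%N]]%fset
      /\ #|` Dset2 G m m'| + 2 <= #|` Dset2 (shift_sg G e) (2 * e + m) (2 * e + m')|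
      /\ #|` Dset2 (shift_sg G e) (2 * e + m) (2 * e + m')| <= #|` Dset2 G m m'| + 3).
Proof.
case=> _ hadd _ Ge Gm Gm'.
have P1 : Dset2 (shift_sg G e) (2 * e + m) (2 * e + m') =
    (fshift e (Dset2 G m m') `|` [fset 0%N; (2 * e + m)%N; (2 * e + m')%N])%fset.
  apply/fsetP => y; rewrite /Dset2 !in_fsetU !memDsh // memsh !in_fsetU !in_fset1.
  case: (y == 0); case: (y == 2 * e + m); case: (y == 2 * e + m'); case: (e <= y);
  case: (y - e \in Dset G m); case: (y - e \in Dset G m'); by [].
split => // hlt.
have D : [disjoint fshift e (Dset2 G m m') & [fset 0%N; (2 * e + m)%N; (2 * e + m')%N]]%fset.
  apply/fdisjointP => a; rewrite memsh /Dset2 => /andP[ea] /fsetUP; rewrite !memD => h.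
  have hle : (a - e <= m) || (a - e <= m') by case: h => /and3P[-> _ _]; rewrite ?orbT.
  rewrite !in_fsetU !in_fset1; apply/negP; case/orP => [/orP[]|] /eqP ?; case/orP: hle => ?; lia.
split => //.
rewrite P1 cardfsU (disjoint_fsetI0 D) cardfs0 subn0.
have -> : #|` fshift e (Dset2 G m m')| = #|` Dset2 G m m'|.
  by rewrite /fshift card_imfset //; exact: addnI.
have : 2 <= #|` [fset 0%N; (2 * e + m)%N; (2 * e + m')%N]%fset| <= 3.
  have -> : [fset 0%N; (2 * e + m)%N; (2 * e + m')%N]%fset = (0 |` ((2 * e + m)%N |` [fset (2 * e + m')%N]))%fset.
    by apply/fsetP => y; rewrite !in_fsetU !in_fset1 orbA.
  rewrite !cardfsU1 cardfs1 !in_fsetU !in_fset1.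
  have -> : (0 == 2 * e + m) = false by apply/eqP; lia.
  have -> : (0 == 2 * e + m') = false by apply/eqP; lia.
  by case: (2 * e + m == 2 * e + m').
lia.
Qed.
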